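(* Let $\Delta$ be the closed triangle in the Euclidean plane with side lengths $100$, $100$ and $90$. Then there exist $16$ closed rectangles, each of size $20\times 10$, all contained in $\Delta$ and with pairwise disjoint interiors.
   Context: Rectangles may be placed at any position and with any orientation in the plane (they need not be parallel to one another or to any side of the triangle). *)

(* Defs.v *)
From Stdlib Require Import Reals.
Open Scope R_scope.

Definition pt := (R * R)%type.

(* The closed triangle with side lengths 100, 100, 90, placed with vertices
   A = (0,0), B = (90,0), C = (45, sqrt 7975)  (|AC| = |BC| = 100, |AB| = 90),
   as the convex hull of its vertices. *)
Definition vA : pt := (0, 0).
Definition vB : pt := (90, 0).
Definition vC : pt := (45, sqrt 7975).

Definition in_triangle (x : pt) : Prop :=
  exists a b c : R, 0 <= a /\ 0 <= b /\ 0 <= c /\ a + b + c = 1 /\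
    fst x = a * fst vA + b * fst vB + c * fst vC /\
    snd x = a * snd vA + b * snd vB + c * snd vC.

Definition in_rect (p : pt) (th : R) (x : pt) : Prop :=
  exists s t : R, 0 <= s <= 20 /\ 0 <= t <= 10 /\
    fst x = fst p + s * cos th - t * sin th /\
    snd x = snd p + s * sin th + t * cos th.

Definition in_rect_interior (p : pt) (th : R) (x : pt) : Prop :=
  exists s t : R, 0 < s < 20 /\ 0 < t < 10 /\
    fst x = fst p + s * cos th - t * sin th /\
    snd x = snd p + s * sin th + t * cos th.

(* Main.v *)
Require Import Defs.
From Stdlib Require Import Reals Lra Lia Psatz.
Open Scope R_scope.

Lemma cs_atan (a b c : R) : 0 < a -> 0 < c -> a*a + b*b = c*c ->
  cos (atan (b/a)) = a/c /\ sin (atan (b/a)) = b/c.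
Proof.
  intros Ha Hc E.
  assert (H1 : 1 + (b/a)^2 = (c/a)^2).
  { replace ((c/a)^2) with ((c*c)/(a*a)) by (field; lra). rewrite <- E. field. lra. }
  assert (H2 : sqrt (1 + (b/a)^2) = c/a).
  { rewrite H1. apply sqrt_pow2. apply Rlt_le. apply Rdiv_lt_0_compat; lra. }
  rewrite cos_atan, sin_atan.
  assert (Hs: (b/a)² = (b/a)^2) by (unfold Rsqr; ring).
  rewrite Hs, H2. split; field; lra.
Qed.

Lemma box_aff (f0 f1 f2 s t : R) : 0 <= f0 -> 0 <= f0 + 20*f1 -> 0 <= f0 + 10*f2 ->
  0 <= f0 + 20*f1 + 10*f2 -> 0 <= s <= 20 -> 0 <= t <= 10 -> 0 <= f0 + s*f1 + t*f2.
Proof.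
  intros H00 H10 H01 H11 Hs Ht.
  assert (E : f0 + s*f1 + t*f2 =
     (1 - s/20)*(1-t/10)*f0 + (s/20)*(1-t/10)*(f0+20*f1) + (1-s/20)*(t/10)*(f0+10*f2)
     + (s/20)*(t/10)*(f0+20*f1+10*f2)) by field.
  rewrite E.
  assert (0 <= 1 - s/20) by lra. assert (0 <= s/20) by lra.
  assert (0 <= 1 - t/10) by lra. assert (0 <= t/10) by lra.
  repeat apply Rplus_le_le_0_compat; repeat apply Rmult_le_pos; lra.
Qed.

Lemma s_bound : 89302/1000 < sqrt 7975.
Proof.
  rewrite <- (sqrt_pow2 (89302/1000)) by lra.
  apply sqrt_lt_1_alt. lra.
Qed.

Definition good (x y : R) : Prop :=
  0 <= y /\ 45*y <= 89302/1000 * x /\ 45*y <= 89302/1000 * (90 - x).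

Lemma good_tri (x : pt) : good (fst x) (snd x) -> in_triangle x.
Proof.
  destruct x as [x y]; simpl. intros [Hy [Hl Hr]].
  pose proof s_bound as Hs. set (s := sqrt 7975) in *.
  assert (Hs0 : 0 < s) by lra.
  exists (1 - (x/90 - y/(2*s)) - y/s), (x/90 - y/(2*s)), (y/s).
  unfold vA, vB, vC; simpl. fold s.
  assert (Hx : 0 <= x) by lra. assert (Hx2 : x <= 90) by lra.
  assert (A1 : 45*y <= s*x) by nra.
  assert (A2 : 45*y <= s*(90-x)) by nra.
  repeat split.
  - apply Rmult_le_reg_r with (2*s*90). lra. field_simplify; nra.
  - apply Rmult_le_reg_r with (2*s*90). lra. field_simplify; nra.
  - unfold Rdiv; apply Rmult_le_pos; [lra| apply Rlt_le, Rinv_0_lt_compat; lra].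
  - ring.
  - field. lra.
  - field. lra.
Qed.

Definition px (i : nat) : R :=
  match i with
  | 0 => (13224023/367700)
  | 1 => (11963987/857000)
  | 2 => (3938439/61000)
  | 3 => (22687111/653000)
  | 4 => (103/20)
  | 5 => (111213/4072)
  | 6 => (104028593/2777000)
  | 7 => (10937809/252125)
  | 8 => (40847977/735400)
  | 9 => (8103/125)
  | 10 => (5804549/147080)
  | 11 => (29424387/797000)
  | 12 => (35689723/793000)
  | 13 => (8030357/857000)
  | 14 => (10869402/264625)
  | 15 => (185965877/3461000)
  | _ => 0
  end.
Definition py (i : nat) : R :=
  match i with
  | 0 => (180109351/3677000)
  | 1 => (10821121/428500)
  | 2 => (857029/30500)
  | 3 => (37379/326500)
  | 4 => (73/1000)
  | 5 => (3143199/101800)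
  | 6 => (3734881/138850)
  | 7 => (9392153/201700)
  | 8 => (33844959/735400)
  | 9 => (53/500)
  | 10 => (286403431/3677000)
  | 11 => (407189/15940)
  | 12 => (4672529/99125)
  | 13 => (6959479/428500)
  | 14 => (38674/264625)
  | 15 => (93379867/3461000)
  | _ => 0
  end.
Definition ka (i : nat) : R :=
  match i with
  | 0 => 1652
  | 1 => 3996
  | 2 => 136
  | 3 => 315
  | 4 => 1
  | 5 => 220
  | 6 => 1095
  | 7 => 1855
  | 8 => 1652
  | 9 => 1
  | 10 => 1652
  | 11 => 555
  | 12 => 168
  | 13 => 3996
  | 14 => 2115
  | 15 => 1539
  | _ => 1
  end.
Definition kb (i : nat) : R :=
  match i with
  | 0 => 3285
  | 1 => (-(1547))
  | 2 => (-(273))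
  | 3 => 572
  | 4 => 0
  | 5 => 459
  | 6 => 2552
  | 7 => 792
  | 8 => (-(3285))
  | 9 => 0
  | 10 => (-(3285))
  | 11 => (-(572))
  | 12 => (-(775))
  | 13 => (-(1547))
  | 14 => 92
  | 15 => (-(3100))
  | _ => 0
  end.
Definition kc (i : nat) : R :=
  match i with
  | 0 => 3677
  | 1 => 4285
  | 2 => 305
  | 3 => 653
  | 4 => 1
  | 5 => 509
  | 6 => 2777
  | 7 => 2017
  | 8 => 3677
  | 9 => 1
  | 10 => 3677
  | 11 => 797
  | 12 => 793
  | 13 => 4285
  | 14 => 2117
  | 15 => 3461
  | _ => 1
  end.

Definition pp (i : nat) : pt := (px i, py i).
Definition th (i : nat) : R := atan (kb i / ka i).

Ltac cases16 i tac := do 16 (destruct i as [|i]; [tac|]); tac.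
Ltac cases16' i tac := do 16 (destruct i as [|i]; [tac|]).

Lemma trig (i : nat) : cos (th i) = ka i / kc i /\ sin (th i) = kb i / kc i.
Proof.
  unfold th; apply cs_atan; cases16 i ltac:(unfold ka, kb, kc; lra).
Qed.

Lemma rect_good (px py ca sa : R) :
  good px py -> good (px + 20*ca) (py + 20*sa) -> good (px - 10*sa) (py + 10*ca) ->
  good (px + 20*ca - 10*sa) (py + 20*sa + 10*ca) ->
  forall s t, 0 <= s <= 20 -> 0 <= t <= 10 -> good (px + s*ca - t*sa) (py + s*sa + t*ca).
Proof.
  unfold good; intros [A1 [A2 A3]] [B1 [B2 B3]] [C1 [C2 C3]] [D1 [D2 D3]] s t Hs Ht.
  set (K := 89302/1000) in *.
  split; [|split].
  - assert (0 <= py + s*sa + t*ca) by (apply box_aff; lra). lra.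
  - assert (0 <= (K*px - 45*py) + s*(K*ca - 45*sa) + t*(-K*sa - 45*ca)) by (apply box_aff; lra). lra.
  - assert (0 <= (K*(90-px) - 45*py) + s*(-K*ca - 45*sa) + t*(K*sa - 45*ca)) by (apply box_aff; lra). lra.
Qed.

Lemma corners_good (i : nat) : (i < 16)%nat ->
  let ca := ka i / kc i in let sa := kb i / kc i in
  good (px i) (py i) /\ good (px i + 20*ca) (py i + 20*sa) /\ good (px i - 10*sa) (py i + 10*ca) /\
  good (px i + 20*ca - 10*sa) (py i + 20*sa + 10*ca).
Proof.
  intros Hi; cbv zeta; unfold good.
  cases16' i ltac:(unfold px, py, ka, kb, kc; repeat split; lra).
  lia.
Qed.

Lemma repr (i : nat) (x : pt) : in_rect (pp i) (th i) x ->
  exists s t, 0 <= s <= 20 /\ 0 <= t <= 10 /\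
    fst x = px i + s*(ka i / kc i) - t*(kb i / kc i) /\ snd x = py i + s*(kb i / kc i) + t*(ka i / kc i).
Proof.
  destruct (trig i) as [Hc Hs]. intros (s & t & H1 & H2 & E1 & E2).
  exists s, t. rewrite Hc, Hs in *. simpl in *. auto.
Qed.

Lemma repri (i : nat) (x : pt) : in_rect_interior (pp i) (th i) x ->
  exists s t, 0 < s < 20 /\ 0 < t < 10 /\
    fst x = px i + s*(ka i / kc i) - t*(kb i / kc i) /\ snd x = py i + s*(kb i / kc i) + t*(ka i / kc i).
Proof.
  destruct (trig i) as [Hc Hs]. intros (s & t & H1 & H2 & E1 & E2).
  exists s, t. rewrite Hc, Hs in *. simpl in *. auto.
Qed.

Lemma disj (i j : nat) : (i < 16)%nat -> (j < 16)%nat -> i <> j ->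
  forall x1 x2 s t s' t' : R,
  0 < s < 20 -> 0 < t < 10 -> 0 < s' < 20 -> 0 < t' < 10 ->
  x1 = px i + s*(ka i / kc i) - t*(kb i / kc i) -> x2 = py i + s*(kb i / kc i) + t*(ka i / kc i) ->
  x1 = px j + s'*(ka j / kc j) - t'*(kb j / kc j) -> x2 = py j + s'*(kb j / kc j) + t'*(ka j / kc j) ->
  False.
Proof.
  intros Hi Hj Hij.
  cases16 i ltac:(cases16 j ltac:(first [lia | (unfold px, py, ka, kb, kc; intros; lra)])).
Qed.

Theorem mainTheorem2 :
  exists (p : nat -> pt) (th : nat -> R),
    (forall i : nat, (i < 16)%nat ->
       forall x : pt, in_rect (p i) (th i) x -> in_triangle x) /\
    (forall i j : nat, (i < 16)%nat -> (j < 16)%nat -> i <> j ->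
       ~ (exists x : pt, in_rect_interior (p i) (th i) x /\
                         in_rect_interior (p j) (th j) x)).
Proof.
  exists pp, th. split.
  - intros i Hi x Hx. apply good_tri.
    destruct (repr i x Hx) as (s & t & Hs & Ht & E1 & E2).
    destruct (corners_good i Hi) as (G1 & G2 & G3 & G4).
    rewrite E1, E2. apply rect_good; auto.
  - intros i j Hi Hj Hij [x [Hx Hy]].
    destruct (repri i x Hx) as (s & t & Hs & Ht & E1 & E2).
    destruct (repri j x Hy) as (s' & t' & Hs' & Ht' & E1' & E2').
    exact (disj i j Hi Hj Hij (fst x) (snd x) s t s' t' Hs Ht Hs' Ht' E1 E2 E1' E2').
Qed.
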